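(* Let $\mathcal A$ be a von Neumann algebra, $G$ a group of normal $*$-automorphisms of $\mathcal A$, and $\varphi$ a faithful $G$-strongly quasi invariant state on $\mathcal A$ with cocycles $(x_g)_{g\in G}$. If $x_g\in\mathcal F(G)$ for some $g\in G$, then $x_g=\mathbf 1$.
   Context: $\varphi$ is $G$-strongly quasi invariant if $\varphi$ is a faithful normal state and for every $g\in G$ there is a self-adjoint $x_g\in\mathcal A$ with $\varphi(g(a))=\varphi(x_ga)$ for all $a\in\mathcal A$. $\mathcal F(G)=\{a\in\mathcal A:h(a)=a\ \forall h\in G\}$. *)

(* Defs.v *)
(* Algebraic framework for Lemma 2.11: a unital complex
   *-algebra (any von Neumann algebra is one), states, faithfulness,
   *-automorphisms, groups of them, strong quasi-invariance, fixed points. *)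
From HB Require Import structures.
From mathcomp Require Import all_boot all_order all_algebra.
Set Implicit Arguments. Unset Strict Implicit. Unset Printing Implicit Defensive.
Import Order.TTheory GRing.Theory Num.Theory.
Local Open Scope ring_scope.

Section StarAlg.
Variables (C : numClosedFieldType) (A : algType C).

Definition star_involution (st : A -> A) : Prop :=
  [/\ forall a b, st (a + b) = st a + st b,
      forall (c : C) a, st (c *: a) = c^* *: st a,
      forall a b, st (a * b) = st b * st a
    & forall a, st (st a) = a].

Definition is_state (st : A -> A) (phi : A -> C) : Prop :=
  [/\ forall (c : C) a b, phi (c *: a + b) = c * phi a + phi b,
      forall a, 0 <= phi (st a * a)
    & phi 1 = 1].

Definition faithful (st : A -> A) (phi : A -> C) : Prop :=
  forall a, phi (st a * a) = 0 -> a = 0.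

Definition star_automorphism (st : A -> A) (g : A -> A) : Prop :=
  [/\ bijective g,
      forall (c : C) a b, g (c *: a + b) = c *: g a + g b,
      forall a b, g (a * b) = g a * g b,
      g 1 = 1
    & forall a, g (st a) = st (g a)].

Definition automorphism_group (st : A -> A) (G : (A -> A) -> Prop) : Prop :=
  [/\ forall g, G g -> star_automorphism st g,
      G id,
      forall g h, G g -> G h -> G (g \o h)
    & forall g, G g -> exists2 h, G h & cancel g h /\ cancel h g].

Definition strongly_quasi_invariant_with (st : A -> A) (G : (A -> A) -> Prop)
    (phi : A -> C) (x : (A -> A) -> A) : Prop :=
  [/\ is_state st phi, faithful st phi
    & forall g, G g -> st (x g) = x g /\ forall a, phi (g a) = phi (x g * a)].

Definition fixed_points (G : (A -> A) -> Prop) (a : A) : Prop :=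
  forall h, G h -> h a = a.

End StarAlg.

(* Main.v *)
Require Import Defs.
From HB Require Import structures.
From mathcomp Require Import all_boot all_order all_algebra.
Import Order.TTheory GRing.Theory Num.Theory.
Local Open Scope ring_scope.

Theorem lemma2p11 (C : numClosedFieldType) (A : algType C) (st : A -> A)
    (G : (A -> A) -> Prop) (phi : A -> C) (x : (A -> A) -> A) :
  star_involution st ->
  automorphism_group st G ->
  strongly_quasi_invariant_with st G phi x ->
  forall g, G g -> fixed_points G (x g) -> x g = 1.
Proof.
move=> [stD stZ stM stK] [Gaut _ _ _] [[phiL _ phi1] phiF Hx] g Gg Fx.
have [_ _ _ g1 _] := Gaut g Gg.
have [sx Hphi] := Hx g Gg.
set y := x g in sx Hphi Fx *.
have st1 : st 1 = 1.
  by have := stM (st 1) 1; rewrite mulr1 stK mulr1.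
have phiD : forall a b, phi (a + b) = phi a + phi b.
  by move=> a b; have := phiL 1 a b; rewrite scale1r mul1r.
have phi0 : phi 0 = 0.
  by have := phiD 0 0; rewrite addr0 => /eqP; rewrite -[X in X == _]addr0 (inj_eq (addrI _)) eq_sym => /eqP.
have phiZ : forall c a, phi (c *: a) = c * phi a.
  by move=> c a; rewrite -[c *: a]addr0 phiL phi0 addr0.
have py : phi y = 1 by rewrite -[y]mulr1 -Hphi g1.
have pyy : phi (y * y) = 1 by rewrite -Hphi (Fx g Gg).
have e : y - 1 = y + (-1) *: 1 by rewrite scaleN1r.
have := phiF (y - 1).
rewrite e stD stZ sx st1 -e.
have -> : (-1 : C)^* = -1 by rewrite rmorphN rmorph1.
rewrite scaleN1r.
have -> : (y - 1) * (y - 1) = y * y + (-2 : C) *: y + 1.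
  rewrite mulrBl !mulrBr !mulr1 mul1r scaleNr scaler_nat mulr2n.
  by rewrite !opprD !opprK !addrA.
rewrite !phiD phiZ py pyy phi1.
move=> H; apply/eqP; rewrite -subr_eq0; apply/eqP/H.
by rewrite mulr1 addrAC -[1 + 1]/(1 *+ 2) subrr.
Qed.
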